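(* Let $\alpha=(x,u')$ and $\beta=(y,v')$ be points of $\mathcal{S}$ with $x\neq y$, $u'\neq v'$, $u'\notin y'^{\perp}$ and $v'\notin x'^{\perp}$ (perps taken in $S'$). Then $|\{\alpha,\beta\}^{\perp}|\geq 3$ in $\mathcal{S}$.
   Context: Let $S=(P,L)$ and $S'=(P',L')$ be generalized quadrangles of order $(2,2)$ (every line has 3 points, every point lies on 3 lines, and for each point $x$ and line $l\not\ni x$ exactly one point of $l$ is collinear with $x$), with an isomorphism $x\mapsto x'$ from $S$ to $S'$. In a point-line geometry, $x^{\perp}$ is $x$ together with all points collinear with $x$, and $A^{\perp}=\bigcap_{a\in A}a^{\perp}$. A triad is a set of three pairwise non-collinear points, complete if $|T^{\perp}|=3$. The geometry $\mathcal{S}=(\mathcal{P},\mathcal{L})$ has point set $\mathcal{P}=\{(x,y')\in P\times P':y'\in x'^{\perp}\}$ and lines all $3$-subsets $\{(x,u'),(y,v'),(z,w')\}$ of $\mathcal{P}$ where $T=\{x,y,z\}$ (three distinct points) is a line or a complete triad of $S$ and $\{u',v',w'\}=T'^{\perp}$ in $S'$ with $u',v',w'$ distinct. *)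

(* Defs.v *)
From mathcomp Require Import all_boot.
Set Implicit Arguments. Unset Strict Implicit. Unset Printing Implicit Defensive.

Section Geom.
Variable P : finType.
Implicit Types (L : {set {set P}}) (x y : P) (A : {set P}).

Definition collinear L x y : bool := [exists l in L, (x \in l) && (y \in l)].

Definition perp L x : {set P} := [set y | (y == x) || collinear L x y].

Definition perpS L A : {set P} := \bigcap_(a in A) perp L a.

Definition GQ22 L : Prop :=
  [/\ (forall l, l \in L -> #|l| = 3),
      (forall x, #|[set l in L | x \in l]| = 3),
      (forall x y, x != y -> #|[set l in L | (x \in l) && (y \in l)]| <= 1)
    & (forall x l, l \in L -> x \notin l ->
         #|[set y in l | collinear L x y]| = 1)].

Definition triad L A : bool :=
  (#|A| == 3) && [forall a in A, forall b in A, (a != b) ==> ~~ collinear L a b].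

Definition complete_triad L A : bool := triad L A && (#|perpS L A| == 3).

End Geom.

Definition is_iso (P P' : finType) (L : {set {set P}}) (L' : {set {set P'}})
  (f : P -> P') : Prop :=
  bijective f /\ forall l : {set P}, (l \in L) = (f @: l \in L').

Section Construction.
Variables (P P' : finType) (L : {set {set P}}) (L' : {set {set P'}}) (f : P -> P').

Definition calP : {set (P * P')} := [set p | p.2 \in perp L' (f p.1)].

Definition calL : {set {set (P * P')}} :=
  [set X : {set (P * P')} | (X \subset calP) &&
    [exists x : P, exists y : P, exists z : P,
     exists u : P', exists v : P', exists w : P',
       [&& (x != y), (x != z), (y != z), (u != v), (u != w), (v != w),
           X == [set (x, u); (y, v); (z, w)],
           ([set x; y; z] \in L) || complete_triad L [set x; y; z] &
           perpS L' [set f x; f y; f z] == [set u; v; w]]]].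
End Construction.

(* Main.v *)
Require Import Defs.
From mathcomp Require Import all_boot.
Set Implicit Arguments. Unset Strict Implicit. Unset Printing Implicit Defensive.

Lemma card3_two (T : finType) (S : {set T}) a b :
  #|S| = 3 -> a \in S -> b \in S -> a != b ->
  exists t, [/\ t != a, t != b & S = [set a; b; t]].
Proof.
move=> S3 aS bS ab.
have bSa : b \in S :\ a by rewrite !inE eq_sym ab.
have : #|S :\ a :\ b| = 1.
  move: S3; rewrite (cardsD1 a) aS (cardsD1 b (S :\ a)) bSa. by case.
move/eqP/cards1P=> [t Ht].
have tS : t \in S :\ a :\ b by rewrite Ht inE.
move: (tS); rewrite !inE => /and3P [tb ta _].
exists t; split => //.
apply/setP => z; rewrite !inE.
case: (z =P a) => [->|za]; first by rewrite aS.
case: (z =P b) => [->|zb]; first by rewrite bS.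
move/setP: Ht => /(_ z); rewrite !inE.
by move/eqP/negbTE: za => -> ; move/eqP/negbTE: zb => -> /=.
Qed.

Lemma card3_ex (T : finType) (S : {set T}) :
  #|S| = 3 -> exists a b c, [/\ a != b, a != c, b != c & S = [set a; b; c]].
Proof.
move=> S3.
have : 0 < #|S| by rewrite S3.
case/card_gt0P => a aS.
have : 0 < #|S :\ a| by move: S3; rewrite (cardsD1 a) aS add1n; case=> ->.
case/card_gt0P => b; rewrite !inE => /andP [ba bS].
have ab : a != b by rewrite eq_sym.
have [c [cb ca ->]] := card3_two S3 aS bS ab.
by exists a, b, c; split => //; rewrite eq_sym.
Qed.

Lemma card_ge2 (T : finType) (S : {set T}) a b :
  a \in S -> b \in S -> a != b -> 2 <= #|S|.
Proof.
move=> aS bS ab.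
have -> : 2 = #|[set a; b]| by rewrite cards2 ab.
apply: subset_leq_card; apply/subsetP => z; rewrite !inE => /orP [] /eqP -> //.
Qed.

Lemma pigeon4 (T : finType) (S : {set T}) x1 x2 y1 y2 :
  #|S| <= 3 -> x1 \in S -> x2 \in S -> y1 \in S -> y2 \in S ->
  x1 != x2 -> y1 != x1 -> y1 != x2 -> y2 != x1 -> y2 != x2 -> y1 = y2.
Proof.
move=> S3 h1 h2 h3 h4 d12 a b c d.
apply/eqP; apply/negPn/negP => y12.
have : 2 <= #|S :\ y1 :\ y2|.
  apply: (@card_ge2 _ _ x1 x2) => //; rewrite !inE ?h1 ?h2 ?andbT.
  - by rewrite eq_sym c eq_sym a.
  - by rewrite eq_sym d eq_sym b.
move: S3; rewrite (cardsD1 y1) h3 (cardsD1 y2 (S :\ y1)) !inE h4 andbT eq_sym y12.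
by move=> H1 H2; move: H1; rewrite add1n add1n !ltnS => /(leq_trans H2).
Qed.


Section GQ.
Variable T : finType.
Variable L : {set {set T}}.
Hypothesis HL : GQ22 L.

Lemma lineC l : l \in L -> #|l| = 3.
Proof. by case: HL => H _ _ _; apply: H. Qed.

Lemma linesC x : #|[set l in L | x \in l]| = 3.
Proof. by case: HL => _ H _ _; apply: H. Qed.

Lemma uniq_line x y l l' : x != y -> l \in L -> l' \in L ->
  x \in l -> y \in l -> x \in l' -> y \in l' -> l = l'.
Proof.
move=> xy lL l'L xl yl xl' yl'.
case: HL => _ _ H _.
have /card_le1_eqP H1 := H x y xy.
by apply: H1; rewrite inE ?lL ?l'L ?xl ?yl ?xl' ?yl'.
Qed.

Lemma colP x y : reflect (exists2 l, l \in L & (x \in l) && (y \in l)) (collinear L x y).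
Proof.
apply: (iffP existsP) => [[l /andP [lL H]]|[l lL H]]; exists l => //.
by rewrite lL H.
Qed.

Lemma line_col l x y : l \in L -> x \in l -> y \in l -> collinear L x y.
Proof. by move=> lL xl yl; apply/colP; exists l => //; rewrite xl yl. Qed.

Lemma col_sym x y : collinear L x y = collinear L y x.
Proof. by apply/colP/colP => [[l lL /andP [? ?]]|[l lL /andP [? ?]]]; exists l => //; apply/andP. Qed.

Lemma line_ex x : exists2 l, l \in L & x \in l.
Proof.
have : 0 < #|[set l in L | x \in l]| by rewrite linesC.
by case/card_gt0P => l; rewrite inE => /andP [? ?]; exists l.
Qed.

Lemma col_refl x : collinear L x x.
Proof. by have [l lL xl] := line_ex x; apply: (line_col lL). Qed.

Lemma perpE x y : (y \in perp L x) = collinear L x y.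
Proof. by rewrite inE; case: (y =P x) => [->|]; rewrite ?col_refl. Qed.

Lemma perp_sym x y : (y \in perp L x) = (x \in perp L y).
Proof. by rewrite !perpE col_sym. Qed.

Lemma g4 x l : l \in L -> x \notin l -> #|[set y in l | collinear L x y]| = 1.
Proof. by case: HL => _ _ _ H; apply: H. Qed.

Lemma g4_ex x l : l \in L -> x \notin l -> exists2 p, p \in l & collinear L x p.
Proof.
move=> lL xl; have : 0 < #|[set y in l | collinear L x y]| by rewrite g4.
by case/card_gt0P => p; rewrite inE => /andP [? ?]; exists p.
Qed.

Lemma g4_uniq x l p q : l \in L -> x \notin l -> p \in l -> q \in l ->
  collinear L x p -> collinear L x q -> p = q.
Proof.
move=> lL xl pl ql xp xq.
have /eqP/cards1P [z Hz] := g4 lL xl.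
have : p \in [set y in l | collinear L x y] by rewrite inE pl xp.
have : q \in [set y in l | collinear L x y] by rewrite inE ql xq.
by rewrite Hz !inE => /eqP -> /eqP ->.
Qed.

Lemma triangle x y z : x != y -> y != z -> x != z ->
  collinear L x y -> collinear L y z -> collinear L x z ->
  exists2 l, l \in L & [&& x \in l, y \in l & z \in l].
Proof.
move=> xy yz xz cxy cyz cxz.
case/colP: cyz => l lL /andP [yl zl].
case xl: (x \in l); first by exists l => //; rewrite xl yl zl.
have := g4_uniq lL (negbT xl) yl zl cxy cxz.
by move/eqP; rewrite (negbTE yz).
Qed.

Lemma perpS2 a b : perpS L [set a; b] = perp L a :&: perp L b.
Proof.
apply/setP => y; rewrite /perpS in_setI; apply/bigcapP/andP.
  by move=> H; split; apply: H; rewrite !inE eqxx ?orbT.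
by case=> ha hb z /set2P [] ->.
Qed.

Lemma perpS3 a b c : perpS L [set a; b; c] = perp L a :&: perp L b :&: perp L c.
Proof.
apply/setP => y; rewrite /perpS !in_setI -andbA; apply/bigcapP/and3P.
  by move=> H; split; apply: H; rewrite !inE eqxx ?orbT.
by case=> ha hb hc z /setUP [/set2P [] -> | /set1P ->].
Qed.

Lemma perp2_line a b l : a != b -> l \in L -> a \in l -> b \in l ->
  perp L a :&: perp L b = l.
Proof.
move=> ab lL al bl; apply/setP => y; rewrite in_setI !perpE.
apply/andP/idP => [[cay cby]|yl]; last by split; apply: (line_col lL).
apply/negPn/negP => yl.
have := g4_uniq lL yl al bl; rewrite !(col_sym y) => /(_ cay cby) /eqP.
by rewrite (negbTE ab).
Qed.

Lemma perp2_card a b : a != b -> #|perp L a :&: perp L b| = 3.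
Proof.
move=> ab; case cab: (collinear L a b).
  by case/colP: cab => l lL /andP [al bl]; rewrite (perp2_line ab lL al bl) lineC.
pose La := [set l in L | a \in l].
pose phi (l : {set T}) := odflt a [pick y in l | collinear L b y].
have phiP l : l \in L -> a \in l -> (phi l \in l) && collinear L b (phi l).
  move=> lL al.
  have bl : b \notin l by apply/negP => bl; rewrite (line_col lL al bl) in cab.
  have [p pl bp] := g4_ex lL bl.
  rewrite /phi; case: pickP => [y /andP [yl yb]|H] /=; first by rewrite yl yb.
  by have := H p; rewrite pl bp.
have -> : perp L a :&: perp L b = phi @: La.
  apply/setP => y; rewrite in_setI !perpE; apply/andP/imsetP.
    case=> cay cby; case/colP: cay => l lL /andP [al yl].
    exists l; first by rewrite inE lL al.
    have bl : b \notin l by apply/negP => bl; rewrite (line_col lL al bl) in cab.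
    case/andP: (phiP l lL al) => pl bp.
    exact: (g4_uniq lL bl yl pl cby bp).
  case=> l; rewrite inE => /andP [lL al] ->.
  case/andP: (phiP l lL al) => pl bp; split => //.
  exact: (line_col lL al pl).
rewrite card_in_imset ?linesC //.
move=> l l'; rewrite !inE => /andP [lL al] /andP [l'L al'] e.
case/andP: (phiP l lL al) => pl bp.
case/andP: (phiP l' l'L al') => pl' bp'.
have ap : a != phi l.
  by apply/eqP => e'; move: bp; rewrite -e' col_sym cab.
by apply: (uniq_line ap lL l'L al pl al'); rewrite e.
Qed.

Lemma perp2_noncol a b c c' : ~~ collinear L a b ->
  c \in perp L a :&: perp L b -> c' \in perp L a :&: perp L b -> c != c' ->
  ~~ collinear L c c'.
Proof.
rewrite !in_setI !perpE => nab /andP [ac bc] /andP [ac' bc'] cc'.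
apply/negP => ccc.
have ca : a != c by apply/eqP => e; move: nab; rewrite e col_sym bc.
have ca' : a != c' by apply/eqP => e; move: nab; rewrite e col_sym bc'.
have [l lL /and3P [al cl c'l]] := triangle ca cc' ca' ac ccc ac'.
have bl : b \notin l by apply/negP => bl; move: nab; rewrite (line_col lL al bl).
by move: cc'; rewrite (g4_uniq lL bl cl c'l bc bc') eqxx.
Qed.

Lemma noncol_neq a b : ~~ collinear L a b -> a != b.
Proof. by apply: contra => /eqP ->; rewrite col_refl. Qed.

Lemma R1 c1 c2 a t : ~~ collinear L c1 c2 -> collinear L c1 a -> collinear L c2 a ->
  collinear L c1 t -> collinear L c2 t -> a != t -> ~~ collinear L a t.
Proof.
move=> n12 c1a c2a c1t c2t at_; apply/negP => cat.
have ac1 : a != c1 by apply/eqP => e; move: n12; rewrite -e col_sym c2a.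
have ac2 : a != c2 by apply/eqP => e; move: n12; rewrite -e c1a.
have tc1 : t != c1 by apply/eqP => e; move: n12; rewrite -e col_sym c2t.
have tc2 : t != c2 by apply/eqP => e; move: n12; rewrite -e c1t.
have [m mL /and3P [am tm c1m]] := triangle at_ tc1 ac1 cat ltac:(by rewrite col_sym) ltac:(by rewrite col_sym).
have [m' m'L /and3P [am' tm' c2m']] := triangle at_ tc2 ac2 cat ltac:(by rewrite col_sym) ltac:(by rewrite col_sym).
have e := uniq_line at_ mL m'L am tm am' tm'.
by move: n12; rewrite (line_col mL c1m (_ : c2 \in m)) // e.
Qed.

Lemma R3 la a c3 p c : la \in L -> a \in la -> c3 \in la -> p \in la -> p != a ->
  collinear L a c -> a != c -> ~~ collinear L c c3 -> ~~ collinear L p c.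
Proof.
move=> laL al c3l pl pa cac ac ncc3; apply/negP => cpc.
case: (p =P c) => [e|/eqP pc].
  by move: ncc3; rewrite -e (line_col laL pl c3l).
have [n nL /and3P [pn an cn]] := triangle pa ac pc (line_col laL pl al) cac cpc.
have e := uniq_line pa nL laL pn an pl al.
by move: ncc3; rewrite (line_col nL cn (_ : c3 \in n)) // e.
Qed.

Lemma reg_core a b c1 c2 c3 t : ~~ collinear L a b ->
  collinear L a c1 -> collinear L b c1 -> collinear L a c2 -> collinear L b c2 ->
  collinear L a c3 -> collinear L b c3 ->
  ~~ collinear L c1 c2 -> ~~ collinear L c1 c3 -> ~~ collinear L c2 c3 ->
  collinear L c1 t -> collinear L c2 t -> ~~ collinear L a t -> ~~ collinear L b t ->
  collinear L c3 t.
Proof.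
move=> nab ac1 bc1 ac2 bc2 ac3 bc3 n12 n13 n23 c1t c2t nat nbt.
case n3t0: (collinear L c3 t) => //; move/negbT: n3t0 => n3t.
have ac3' : a != c3 by apply/eqP => e; move: nab; rewrite e col_sym bc3.
have bc3' : b != c3 by apply/eqP => e; move: nab; rewrite e ac3.
have ac1' : a != c1 by apply/eqP => e; move: nab; rewrite e col_sym bc1.
have ac2' : a != c2 by apply/eqP => e; move: nab; rewrite e col_sym bc2.
have bc1' : b != c1 by apply/eqP => e; move: nab; rewrite e ac1.
have bc2' : b != c2 by apply/eqP => e; move: nab; rewrite e ac2.
case/colP: ac3 => la laL /andP [al c3la].
case/colP: bc3 => lb lbL /andP [bl c3lb].
have tla : t \notin la by apply/negP => tl; move: n3t; rewrite (line_col laL c3la tl).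
have tlb : t \notin lb by apply/negP => tl; move: n3t; rewrite (line_col lbL c3lb tl).
have [p pl tp] := g4_ex laL tla.
have [q ql tq] := g4_ex lbL tlb.
have pa : p != a by apply/eqP => e; move: nat; rewrite -e col_sym tp.
have qb : q != b by apply/eqP => e; move: nbt; rewrite -e col_sym tq.
have lab : la != lb.
  by apply/eqP => e; move: nab; rewrite (line_col laL al (_ : b \in la)) // e.
have tc1 : t != c1 by apply/eqP => e; move: n12; rewrite -e col_sym c2t.
have tc2 : t != c2 by apply/eqP => e; move: n12; rewrite -e c1t.
case/colP: c1t => l1 l1L /andP [c1l1 tl1].
case/colP: c2t => l2 l2L /andP [c2l2 tl2].
have l12 : l1 != l2.
  by apply/eqP => e; move: n12; rewrite (line_col l1L c1l1 (_ : c2 \in l1)) // e.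
have npc1 := R3 laL al c3la pl pa ac1 ac1' n13.
have npc2 := R3 laL al c3la pl pa ac2 ac2' n23.
have nqc1 := R3 lbL bl c3lb ql qb bc1 bc1' n13.
have nqc2 := R3 lbL bl c3lb ql qb bc2 bc2' n23.
have pt : p != t by apply/eqP => e; move: tla; rewrite -e pl.
have qt : q != t by apply/eqP => e; move: tlb; rewrite -e ql.
case/colP: tp => mp mpL /andP [tmp pmp].
case/colP: tq => mq mqL /andP [tmq qmq].
have nl (m l : {set T}) (c r : T) : l \in L -> c \in l -> r \in m -> ~~ collinear L r c -> m != l.
  move=> lL cl rm nrc; apply/eqP => e; move: nrc; rewrite -e in lL cl.
  by rewrite (line_col lL rm cl).
have e := pigeon4 (S := [set l in L | t \in l]) (x1 := l1) (x2 := l2) (y1 := mp) (y2 := mq)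
  (eq_leq (linesC t)) ltac:(by rewrite inE l1L tl1) ltac:(by rewrite inE l2L tl2)
  ltac:(by rewrite inE mpL tmp) ltac:(by rewrite inE mqL tmq) l12
  (nl _ _ _ _ l1L c1l1 pmp npc1) (nl _ _ _ _ l2L c2l2 pmp npc2)
  (nl _ _ _ _ l1L c1l1 qmq nqc1) (nl _ _ _ _ l2L c2l2 qmq nqc2).
rewrite -e in qmq.
have cpq := line_col mpL pmp qmq.
have pc3 : p != c3 by apply/eqP => e'; move: n3t; rewrite -e' col_sym (line_col mpL tmp pmp).
have qc3 : q != c3 by apply/eqP => e'; move: n3t; rewrite -e' col_sym (line_col mpL tmp qmq).
have pq : p != q.
  apply/eqP => e'; move/eqP: lab; apply.
  by apply: (uniq_line pc3 laL lbL pl c3la); rewrite ?e'.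
have [n nL /and3P [pn qn c3n]] := triangle pq qc3 pc3 cpq (line_col lbL ql c3lb) (line_col laL pl c3la).
have e1 := uniq_line pc3 nL laL pn c3n pl c3la.
have e2 := uniq_line qc3 nL lbL qn c3n ql c3lb.
by move: lab; rewrite -e1 -e2 eqxx.
Qed.

End GQ.

Section S.
Variable T : finType.
Variable L : {set {set T}}.
Hypothesis HL : GQ22 L.
Lemma regular a b : ~~ collinear L a b -> exists t,
  [/\ t != a, t != b, ~~ collinear L a t, ~~ collinear L b t &
      perp L a :&: perp L b \subset perp L t].
Proof.
move=> nab; have ab := noncol_neq HL nab.
have [c1 [c2 [c3 [d12 d13 d23 EC]]]] := card3_ex (perp2_card HL ab).
have hc : forall c, c \in [set c1; c2; c3] -> collinear L a c && collinear L b c.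
  by move=> c; rewrite -EC in_setI !(perpE HL).
have h1 : c1 \in [set c1; c2; c3] by rewrite !inE eqxx.
have h2 : c2 \in [set c1; c2; c3] by rewrite !inE eqxx ?orbT.
have h3 : c3 \in [set c1; c2; c3] by rewrite !inE eqxx ?orbT.
have /andP [ac1 bc1] := hc c1 h1.
have /andP [ac2 bc2] := hc c2 h2.
have /andP [ac3 bc3] := hc c3 h3.
have inC c : c \in [set c1; c2; c3] -> c \in perp L a :&: perp L b by rewrite EC.
have n12 := perp2_noncol HL nab (inC c1 h1) (inC c2 h2) d12.
have n13 := perp2_noncol HL nab (inC c1 h1) (inC c3 h3) d13.
have n23 := perp2_noncol HL nab (inC c2 h2) (inC c3 h3) d23.
have aM : a \in perp L c1 :&: perp L c2 by rewrite in_setI !(perpE HL) (col_sym L c1) (col_sym L c2) ac1 ac2.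
have bM : b \in perp L c1 :&: perp L c2 by rewrite in_setI !(perpE HL) (col_sym L c1) (col_sym L c2) bc1 bc2.
have [t [ta tb EM]] := card3_two (perp2_card HL d12) aM bM ab.
have : t \in perp L c1 :&: perp L c2 by rewrite EM !inE eqxx ?orbT.
rewrite in_setI !(perpE HL) => /andP [c1t c2t].
have nat : ~~ collinear L a t.
  by apply: (R1 HL n12) => //; rewrite ?(col_sym L c1) ?(col_sym L c2) // eq_sym.
have nbt : ~~ collinear L b t.
  by apply: (R1 HL n12) => //; rewrite ?(col_sym L c1) ?(col_sym L c2) // eq_sym.
exists t; split => //.
rewrite EC; apply/subsetP => c /setUP [/set2P [] -> | /set1P ->];
  rewrite (perpE HL) (col_sym L t) //.
exact: (reg_core HL nab ac1 bc1 ac2 bc2 ac3 bc3 n12 n13 n23 c1t c2t nat nbt).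
Qed.
Lemma card3_dist (a b c : T) : a != b -> a != c -> b != c -> #|[set a; b; c]| = 3.
Proof.
move=> ab ac bc.
have -> : [set a; b; c] = a |: [set b; c] by apply/setP => z; rewrite !inE orbA.
by rewrite cardsU1 cards2 bc !inE negb_or ab ac.
Qed.

Lemma scol a b : a != b -> exists t,
  [/\ t != a, t != b, ([set a; b; t] \in L) || complete_triad L [set a; b; t] &
      perpS L [set a; b; t] = perp L a :&: perp L b].
Proof.
move=> ab; case cab: (collinear L a b).
  case/colP: cab => l lL /andP [al bl].
  have [t [ta tb El]] := card3_two (lineC HL lL) al bl ab.
  exists t; split => //; first by rewrite -El lL.
  rewrite perpS3 (perp2_line HL ab lL al bl); apply/setIidPl.
  by apply/subsetP => z zl; rewrite (perpE HL) (line_col lL) // El !inE eqxx ?orbT.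
have [t [ta tb nat nbt sub]] := regular (negbT cab).
have E : perpS L [set a; b; t] = perp L a :&: perp L b.
  by rewrite perpS3; apply/setIidPl.
exists t; split => //.
apply/orP; right; rewrite /complete_triad E (perp2_card HL) // eqxx andbT.
rewrite /triad card3_dist ?(eq_sym a) ?(eq_sym b) //=.
apply/forallP => z; apply/implyP => hz; apply/forallP => w; apply/implyP => hw.
apply/implyP => zw.
move: hz hw zw; rewrite !inE => /orP [/orP []|] /eqP -> /orP [/orP []|] /eqP -> //;
  rewrite ?eqxx // => _; rewrite ?(col_sym L t) ?(col_sym L b a) ?cab //.
Qed.

Lemma nbd_bound a : #|perp L a :\ a| <= 6.
Proof.
have [l1 [l2 [l3 [_ _ _ EL]]]] := card3_ex (linesC HL a).
have inl l : l \in [set l1; l2; l3] -> (l \in L) && (a \in l) by rewrite -EL inE.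
have c2 l : l \in [set l1; l2; l3] -> #|l :\ a| = 2.
  move=> /inl /andP [lL al]; have := lineC HL lL; rewrite (cardsD1 a) al.
  by rewrite add1n; case.
have sub : perp L a :\ a \subset (l1 :\ a) :|: (l2 :\ a) :|: (l3 :\ a).
  apply/subsetP => y; rewrite in_setD1 (perpE HL) => /andP [ya]; case/(colP L) => l lL /andP [al yl].
  have : l \in [set l1; l2; l3] by rewrite -EL inE lL al.
  by rewrite !inE => /orP [/orP []|] /eqP <-; rewrite ya yl ?orbT.
have cU (A B : {set T}) : #|A :|: B| <= #|A| + #|B| by rewrite cardsU leq_subr.
apply: (leq_trans (subset_leq_card sub)); apply: (leq_trans (cU _ _)).
apply: (@leq_trans (#|l1 :\ a| + #|l2 :\ a| + #|l3 :\ a|)); first by rewrite leq_add2r cU.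
by rewrite (c2 l1) ?(c2 l2) ?(c2 l3) // !inE eqxx ?orbT.
Qed.

Lemma Kaux u v a : ~~ collinear L u v -> a \in perp L u ->
  exists2 b, b \in perp L u :&: perp L v & a \in perp L b.
Proof.
move=> nuv au.
case: (a =P u) => [->|/eqP aneu].
  have : 0 < #|perp L u :&: perp L v| by rewrite (perp2_card HL (noncol_neq HL nuv)).
  case/card_gt0P => b hb; exists b => //.
  by move: hb; rewrite in_setI (perp_sym HL) => /andP [].
move: au; rewrite (perpE HL) => /(colP L) [l lL /andP [ul al]].
have vl : v \notin l by apply/negP => vl; move: nuv; rewrite (line_col lL ul vl).
have [p pl vp] := g4_ex HL lL vl.
exists p; first by rewrite in_setI !(perpE HL) vp (line_col lL ul pl).
by rewrite (perpE HL) (line_col lL pl al).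
Qed.

Lemma Klem a u v : u != v -> exists2 b, b \in perp L u :&: perp L v & a \in perp L b.
Proof.
move=> uv; case cuv: (collinear L u v).
  case/(colP L): cuv => l lL /andP [ul vl].
  rewrite (perp2_line HL uv lL ul vl).
  case al: (a \in l); first by exists a; rewrite // (perpE HL) col_refl.
  have [p pl ap] := g4_ex HL lL (negbT al).
  by exists p; rewrite // (perpE HL) col_sym.
move/negbT: cuv => nuv.
case au: (a \in perp L u); first exact: Kaux.
case av: (a \in perp L v).
  have nvu : ~~ collinear L v u by rewrite col_sym.
  by have [b hb ab] := Kaux nvu av; exists b; rewrite // setIC.
case: (pickP [pred b | (b \in perp L u :&: perp L v) && (a \in perp L b)]) => [b /andP [hb ab]|H].
  by exists b.
exfalso.
have au' : a != u by apply/eqP => e; move: au; rewrite e (perpE HL) col_refl.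
have av' : a != v by apply/eqP => e; move: av; rewrite e (perpE HL) col_refl.
set C := perp L u :&: perp L a.
set D := perp L v :&: perp L a.
have CD : C :&: D = set0.
  apply/setP => e; rewrite in_set0 !in_setI.
  have := H e; rewrite /= !in_setI -(perp_sym HL a e).
  by case: (e \in perp L u); case: (e \in perp L v); case: (e \in perp L a).
have subCD : C :|: D \subset perp L a :\ a.
  apply/subsetP => e; rewrite !in_setU !in_setI in_setD1 => /orP [] /andP [eu ea]; rewrite ea andbT.
    by apply/eqP => e'; move: au; rewrite -e' eu.
  by apply/eqP => e'; move: av; rewrite -e' eu.
have cardCD : #|C :|: D| = 6.
  by rewrite cardsU CD cards0 subn0 /C /D !(perp2_card HL) // eq_sym.
have ECD : C :|: D = perp L a :\ a.
  by apply/eqP; rewrite eqEcard subCD cardCD nbd_bound.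
have : 0 < #|perp L u :&: perp L v| by rewrite (perp2_card HL (noncol_neq HL nuv)).
case/card_gt0P => b hb.
have nab : a \notin perp L b by have := H b; rewrite /= hb => /= ->.
have ab : a != b by apply/eqP => e; move: nab; rewrite e (perpE HL) col_refl.
move: (hb); rewrite in_setI => /andP [ub vb].
have ub' : u != b by apply/eqP => e; move: nuv; rewrite e -(perpE HL) (perp_sym HL) vb.
have vb' : v != b by apply/eqP => e; move: nuv; rewrite e -(perpE HL) ub.
move: (ub) (vb); rewrite !(perpE HL) => /(colP L) [lu luL /andP [ulu blu]] /(colP L) [lv lvL /andP [vlv blv]].
have alu : a \notin lu by apply/negP => al; move: au; rewrite (perpE HL) (line_col luL ulu al).
have alv : a \notin lv by apply/negP => al; move: av; rewrite (perpE HL) (line_col lvL vlv al).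
have c1 l : l \in L -> a \notin l -> #|l :&: perp L a| = 1.
  move=> lL al; rewrite -(g4 HL lL al); apply: eq_card => y; rewrite in_setI (perpE HL) inE.
  by [].
have subE : perp L a :&: perp L b \subset (lu :&: perp L a) :|: (lv :&: perp L a).
  apply/subsetP => e; rewrite in_setI => /andP [ea eb].
  have : e \in perp L a :\ a.
    by rewrite in_setD1 ea andbT; apply/eqP => e'; move: nab; rewrite -e' eb.
  rewrite -ECD !in_setU !in_setI => /orP [] /andP [eu _].
    by rewrite -(perp2_line HL ub' luL ulu blu) in_setI eu eb ea.
  by rewrite -(perp2_line HL vb' lvL vlv blv) in_setI eu eb ea orbT.
have := subset_leq_card subE; rewrite (perp2_card HL ab).
rewrite cardsU (c1 _ luL alu) (c1 _ lvL alv).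
by move/leq_trans/(_ (leq_subr _ _)).
Qed.
End S.


Section Transport.
Variables (P P' : finType) (L : {set {set P}}) (L' : {set {set P'}}) (f : P -> P') (g : P' -> P).
Hypotheses (fK : cancel f g) (gK : cancel g f).
Hypothesis iso : forall l : {set P}, (l \in L) = (f @: l \in L').

Let finj : injective f := can_inj fK.

Lemma col_tr a b : collinear L a b = collinear L' (f a) (f b).
Proof.
apply/(colP L)/(colP L') => [[l lL /andP [al bl]]|[l' l'L /andP [al bl]]].
  by exists (f @: l); rewrite -?iso // !imset_f.
exists (f @^-1: l'); last by rewrite !inE al bl.
rewrite iso; suff -> : f @: (f @^-1: l') = l' by [].
by apply/setP => y'; rewrite -[y']gK mem_imset // inE gK.
Qed.

Lemma perp_tr a y : (f y \in perp L' (f a)) = (y \in perp L a).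
Proof. by rewrite !inE (inj_eq finj) col_tr. Qed.

Lemma perpS_tr (A : {set P}) : f @: perpS L A = perpS L' (f @: A).
Proof.
apply/setP => y'; rewrite -[y']gK mem_imset //.
apply/bigcapP/bigcapP => [H a' /imsetP [a aA ->]|H a aA].
  by rewrite perp_tr; apply: H.
by rewrite -perp_tr; apply: H; apply: imset_f.
Qed.

Lemma ctriad_tr (A : {set P}) : complete_triad L' (f @: A) -> complete_triad L A.
Proof.
case/andP => /andP [c3 H] p3; apply/andP; split; last first.
  by rewrite -(card_imset _ finj) perpS_tr.
apply/andP; split; first by rewrite -(card_imset _ finj).
apply/forallP => a; apply/implyP => aA; apply/forallP => b; apply/implyP => bA.
apply/implyP => ab.
have := forallP H (f a); move/implyP/(_ (imset_f _ aA)) => /forallP /(_ (f b)).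
move/implyP/(_ (imset_f _ bA)); rewrite (inj_eq finj) ab /= col_tr //.
Qed.

Lemma cols (HL' : GQ22 L') x z u w : f x != f z -> u != w ->
  u \in perp L' (f x) :&: perp L' (f z) -> w \in perp L' (f x) :&: perp L' (f z) ->
  collinear (calL L L' f) (x, u) (z, w).
Proof.
move=> fxz uw hu hw.
have [T' [Tx Tz HT EP]] := scol HL' fxz.
have [r [ru rw EQ]] := card3_two (perp2_card HL' fxz) hu hw uw.
pose t := g T'; have ft : f t = T' by rewrite /t gK.
have hr : r \in perpS L' [set f x; f z; T'] by rewrite EP EQ !inE eqxx ?orbT.
apply/existsP; exists [set (x, u); (z, w); (t, r)].
apply/andP; split; last by rewrite !inE !eqxx ?orbT.
rewrite /calL in_set; apply/andP; split.
  apply/subsetP => p /setUP [/set2P [] -> | /set1P ->]; rewrite /calP in_set /=.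
  - by move: hu; rewrite in_setI => /andP [].
  - by move: hw; rewrite in_setI => /andP [].
  - by move: hr; rewrite ft (perpS3 L') !in_setI => /andP [].
apply/existsP; exists x; apply/existsP; exists z; apply/existsP; exists t.
apply/existsP; exists u; apply/existsP; exists w; apply/existsP; exists r.
have xz : x != z by apply: contraNneq fxz => ->.
have xt : x != t by apply: contraNneq Tx => ->; rewrite ft.
have zt : z != t by apply: contraNneq Tz => ->; rewrite ft.
have Eim : f @: [set x; z; t] = [set f x; f z; T'].
  by rewrite imsetU imsetU1 !imset_set1 ft.
rewrite xz xt zt uw eq_sym ru eq_sym rw eqxx /=.
rewrite ft EP EQ eqxx andbT.
case/orP: HT => [HT|HT]; apply/orP; [left|right].
  by rewrite iso Eim.
by apply: ctriad_tr; rewrite Eim.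
Qed.
End Transport.

Theorem lemma3p2 (P P' : finType) (L : {set {set P}}) (L' : {set {set P'}})
  (f : P -> P') :
  GQ22 L -> GQ22 L' -> is_iso L L' f ->
  forall (x y : P) (u v : P'),
    (x, u) \in calP L' f -> (y, v) \in calP L' f ->
    x != y -> u != v ->
    u \notin perp L' (f y) -> v \notin perp L' (f x) ->
    3 <= #|perpS (calL L L' f) [set (x, u); (y, v)]|.
Proof.
move=> HL HL' [[g fK gK] iso] x y u v hxu hyv xy uv nuy nvx.
have finj : injective f := can_inj fK.
have xu : u \in perp L' (f x) by move: hxu; rewrite /calP in_set.
have yv : v \in perp L' (f y) by move: hyv; rewrite /calP in_set.
have fxy : f x != f y by rewrite (inj_eq finj).
pose A := perp L' (f x) :&: perp L' (f y).
pose Zof w := odflt u [pick Z in perp L' u :&: perp L' v | w \in perp L' Z].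
have ZP w : (Zof w \in perp L' u :&: perp L' v) && (w \in perp L' (Zof w)).
  have [b hb wb] := Klem HL' w uv.
  rewrite /Zof; case: pickP => [Z /andP [h1 h2]|H] /=; first by rewrite h1 h2.
  by have := H b; rewrite hb wb.
pose gam w := (g (Zof w), w).
have ginj : injective gam by move=> w1 w2 /(congr1 snd).
have sub : gam @: A \subset perpS (calL L L' f) [set (x, u); (y, v)].
  apply/subsetP => _ /imsetP [w wA ->].
  move: wA; rewrite in_setI => /andP [wx wy].
  case/andP: (ZP w); rewrite in_setI => /andP [Zu Zv] wZ.
  rewrite perpS2 in_setI; apply/andP; split; rewrite in_set; apply/orP; right;
    apply: (cols fK gK iso HL'); rewrite ?gK ?in_setI ?wx ?wy ?wZ ?xu ?yv //.
  - by apply: contraNneq nvx => ->; rewrite (perp_sym HL').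
  - by apply: contraNneq nuy => ->.
  - by rewrite (perp_sym HL').
  - by apply: contraNneq nuy => ->; rewrite (perp_sym HL').
  - by apply: contraNneq nvx => ->.
  - by rewrite (perp_sym HL').
apply: leq_trans (subset_leq_card sub).
by rewrite (card_imset _ ginj) (perp2_card HL').
Qed.
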